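(* Let $\{U'_{k,n}\}_{k\in\mathbb Z,n\in\mathbb N}$ and $\{V'_{\{k,k+1\},n}\}_{k\in\mathbb Z,n\in\mathbb N}$ be independent Bernoulli random variables with parameter $\epsilon>0$, and let $Z=Z(U',V')$. If $\epsilon$ is small enough, then for every finite initial set $Z_0$ the process $Z$ dies out almost surely, and there are constants $\beta_0,\beta_1>0$ such that for every finite nonempty $Z_0$, $$\mathbb E(N_{\mathrm{ext}}\mid Z_0)\le\beta_0\log|Z_0|+\beta_1,$$ where $N_{\mathrm{ext}}=\inf\{n\ge0:Z_n=\emptyset\}$.
   Context: Given $\{0,1\}$-valued variables $U_{k,n}$ and $V_{\{k,k+1\},n}$ ($k\in\mathbb Z$, $n\in\mathbb N$), define the graph $H$ on $\mathbb Z\times\mathbb N$: if $U_{k,n}=1$ add edges from $(k,n)$ to $(k-1,n+1),(k,n+1),(k+1,n+1)$; if $V_{\{k,k+1\},n}=1$ add these edges for both $(k,n)$ and $(k+1,n)$ and also the edge $(k,n)$–$(k+1,n)$. An $H$-valid path is a sequence of $H$-adjacent vertices $(k_0,n_0),\dots,(k_f,n_f)$ with $n_0\le\dots\le n_f$ and $n_i<n_f$ for all $i<f$. Given a finite set $Z_0\subseteq\mathbb Z$, for $n\ge1$ let $Z_n$ be the set of $k$ such that some $H$-valid path goes from $Z_0\times\{0\}$ to $(k,n)$; this defines $Z=Z(U,V)$. $Z$ dies out if $Z_n=\emptyset$ for some $n$. *)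

(* Defs.v *)
From HB Require Import structures.
From mathcomp Require Import all_boot all_order all_algebra.
From mathcomp Require Import all_classical all_reals all_analysis.
Set Implicit Arguments. Unset Strict Implicit. Unset Printing Implicit Defensive.
Import Order.TTheory GRing.Theory Num.Theory.
Local Open Scope ring_scope.
Local Open Scope classical_set_scope.

Definition vtx := (int * nat)%type.

(* A configuration: u k n = U_{k,n}, v k n = V_{{k,k+1},n}. *)
Definition config := (int -> nat -> bool)%type.

Definition up_edge (u v : config) (a b : vtx) : bool :=
  [&& b.2 == a.2.+1, `|b.1 - a.1| <= 1 & [|| u a.1 a.2, v a.1 a.2 | v (a.1 - 1) a.2]].

Definition hor_edge (u v : config) (a b : vtx) : bool :=
  [&& b.2 == a.2, b.1 == a.1 + 1 & v a.1 a.2].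

Definition H_adj (u v : config) (a b : vtx) : bool :=
  [|| up_edge u v a b, up_edge u v b a, hor_edge u v a b | hor_edge u v b a].

Definition valid_path (u v : config) (x : vtx) (s : seq vtx) : Prop :=
  [/\ path (H_adj u v) x s,
      sorted (fun a b : vtx => (a.2 <= b.2)%N) (x :: s) &
      forall i, (i < size s)%N -> ((nth x (x :: s) i).2 < (last x s).2)%N].

Definition Zset (u v : config) (Z0 : seq int) (n : nat) (k : int) : Prop :=
  if n is 0 then k \in Z0 else
  exists (x : vtx) (s : seq vtx),
    [/\ x.1 \in Z0, x.2 = 0%N, valid_path u v x s & last x s = (k, n)].

Definition Z_empty (u v : config) (Z0 : seq int) (n : nat) : Prop :=
  forall k, ~ Zset u v Z0 n k.

Definition dies_out (u v : config) (Z0 : seq int) : Prop :=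
  exists n, Z_empty u v Z0 n.

(* N_ext = inf {n >= 0 : Z_n = emptyset}, equal to +oo if Z never dies out. *)
Definition N_ext (R : realType) (u v : config) (Z0 : seq int) : \bar R :=
  ereal_inf [set (n%:R)%:E | n in [set n | Z_empty u v Z0 n]].

(* Index set of the random variables: inl (k,n) for U'_{k,n},
   inr (k,n) for V'_{{k,k+1},n}. *)
Definition idx := (vtx + vtx)%type.

Definition iid_bernoulli (R : realType) (d : measure_display)
    (T : measurableType d) (P : probability T R) (X : idx -> T -> bool)
    (eps : R) : Prop :=
  [/\ (forall i, measurable [set w : T | X i w]),
      (forall i, P [set w : T | X i w] = eps%:E) &
      (forall (J : seq idx) (b : idx -> bool), uniq J ->
         P [set w : T | all (fun i => X i w == b i) J]
         = (\prod_(i <- J) P [set w : T | X i w = b i])%E)].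

Definition Ucfg T (X : idx -> T -> bool) (w : T) : config :=
  fun k n => X (inl (k, n)) w.
Definition Vcfg T (X : idx -> T -> bool) (w : T) : config :=
  fun k n => X (inr (k, n)) w.

(* Main.v *)
Require Import Defs.
From HB Require Import structures.
From mathcomp Require Import all_boot all_order all_algebra.
From mathcomp Require Import all_classical all_reals all_analysis.
From mathcomp Require Import zify ring lra.
Import Order.TTheory GRing.Theory Num.Theory.
Local Open Scope ring_scope.

Notation choice := (nat * nat * nat)%type.

Definition vars (a : int) (m : nat) (c : choice) : seq idx :=
  let: (k, j, d) := c in
  match k with
  | 0 => [:: inl (a, m)]
  | 1 => [:: inr (a, m)]
  | 2 => [:: inr (a - 1, m)]
  | 3 => [seq inr (a + i%:Z, m) | i <- iota 0 j.+1]
  | _ => [seq inr (a - (i.+1)%:Z, m) | i <- iota 0 j.+1]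
  end.

Definition dest (a : int) (c : choice) : int :=
  let: (k, j, d) := c in
  (if (k < 3)%N then a else if k == 3%N then a + (j.+1)%:Z else a - (j.+1)%:Z)
  + (d%:Z - 1).

Definition okc (M : nat) (c : choice) : bool :=
  let: (k, j, d) := c in
  (d < 3)%N && (((k < 3)%N && (j == 0%N)) || ((3 <= k < 5)%N && (j < M)%N)).

Definition KJ (M : nat) : seq (nat * nat) :=
  [seq (k, 0%N) | k <- iota 0 3] ++ [seq (k, j) | k <- [:: 3%N; 4%N], j <- iota 0 M].

Definition choices (M : nat) : seq choice :=
  [seq (kj.1, kj.2, d) | kj <- KJ M, d <- iota 0 3].

Arguments choices : simpl never.

Lemma mem_choices M c : (c \in choices M) = okc M c.
Proof.
case: c => [[k j] d]; apply/idP/idP.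
- case/allpairsP => [[[k' j'] d'] /= [Hkj Hd [= -> -> ->]]].
  move: Hd; rewrite !inE => Hd.
  move: Hkj; rewrite mem_cat => /orP [/mapP [k'' Hk'' [= -> ->]]|/allpairsP [[k'' j''] /= [Hk Hj [= -> ->]]]].
  + move: Hk''; rewrite !inE; lia.
  + move: Hk Hj; rewrite !inE mem_iota; lia.
- move=> /andP [Hd Hkj].
  apply/allpairsP; exists ((k, j), d) => /=; split => //; last by rewrite !inE; lia.
  rewrite mem_cat; case/orP: Hkj => /andP [Hk Hj].
  + apply/orP; left; move/eqP: Hj => ->; apply/mapP; exists k => //; rewrite !inE; lia.
  + apply/orP; right; apply/allpairsP; exists (k, j) => /=; split => //.
    * rewrite !inE; lia.
    * rewrite mem_iota; lia.
Qed.

Section Det.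
Variables (u v : config).

Definition opn (i : idx) : bool :=
  match i with inl p => u p.1 p.2 | inr p => v p.1 p.2 end.

Fixpoint goodb (M m : nat) (a : int) (n : nat) : bool :=
  if n is n'.+1 then
    has (fun c => all opn (vars a m c) && goodb M m.+1 (dest a c) n') (choices M)
  else true.

Lemma goodbE M m a n : goodb M m a n.+1 =
  has (fun c => all opn (vars a m c) && goodb M m.+1 (dest a c) n) (choices M).
Proof. by []. Qed.

Lemma goodbS M m a n :
  goodb M m a n.+1 <-> exists c, [/\ okc M c, all opn (vars a m c) & goodb M m.+1 (dest a c) n].
Proof.
rewrite goodbE; split.
- case/hasP => c; rewrite mem_choices => Hc /andP [H1 H2]; by exists c.
- case=> c [Hc H1 H2]; apply/hasP; exists c; first by rewrite mem_choices.
  by rewrite H1.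
Qed.

Lemma goodb_mono M M' m a n : (M <= M')%N -> goodb M m a n -> goodb M' m a n.
Proof.
move=> HM; elim: n m a => [//|n IH] m a /goodbS [c [Hc H1 H2]].
apply/goodbS; exists c; split => //; last exact: IH.
by move: Hc HM; clear H1 H2 IH; case: c => [[k j] d] /=; lia.
Qed.

Lemma all_runR a m j :
  all opn [seq inr (a + i%:Z, m) | i <- iota 0 j] <-> (forall i, (i < j)%N -> v (a + i%:Z) m).
Proof.
split.
- move=> /allP H i Hi; apply: (H (inr (a + i%:Z, m))); apply/mapP; exists i => //.
  by rewrite mem_iota.
- move=> H; apply/allP => x /mapP [i]; rewrite mem_iota /= => Hi ->.
  exact: H.
Qed.

Lemma all_runL a m j :
  all opn [seq inr (a - (i.+1)%:Z, m) | i <- iota 0 j] <-> (forall i, (i < j)%N -> v (a - (i.+1)%:Z) m).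
Proof.
split.
- move=> /allP H i Hi; apply: (H (inr (a - (i.+1)%:Z, m))); apply/mapP; exists i => //.
  by rewrite mem_iota.
- move=> H; apply/allP => x /mapP [i]; rewrite mem_iota /= => Hi ->.
  exact: H.
Qed.

Lemma vars0 a m j d : vars a m (0%N, j, d) = [:: inl (a, m)]. Proof. by []. Qed.
Lemma vars1 a m j d : vars a m (1%N, j, d) = [:: inr (a, m)]. Proof. by []. Qed.
Lemma vars2 a m j d : vars a m (2%N, j, d) = [:: inr (a - 1, m)]. Proof. by []. Qed.
Lemma vars3 a m j d : vars a m (3%N, j, d) = [seq inr (a + i%:Z, m) | i <- iota 0 j.+1].
Proof. by []. Qed.
Lemma vars4 a m j d : vars a m (4%N, j, d) = [seq inr (a - (i.+1)%:Z, m) | i <- iota 0 j.+1].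
Proof. by []. Qed.
Lemma destS a k j d : (k < 3)%N -> dest a (k, j, d) = a + (d%:Z - 1).
Proof. by rewrite /dest => ->. Qed.
Lemma dest3 a j d : dest a (3%N, j, d) = a + (j.+1)%:Z + (d%:Z - 1).
Proof. by []. Qed.
Lemma dest4 a j d : dest a (4%N, j, d) = a - (j.+1)%:Z + (d%:Z - 1).
Proof. by []. Qed.

Lemma extR M m a n : v a m -> goodb M m (a + 1) n.+1 -> goodb M.+1 m a n.+1.
Proof.
move=> Va /goodbS [[[k j] d] [Hc H1 H2]]; apply/goodbS.
have {H2} H2 := @goodb_mono M M.+1 _ _ _ (leqnSn M) H2.
case: k Hc H1 H2 => [|[|[|[|[|k]]]]] Hc H1 H2.
- exists (3%N, 0%N, d); split; first by move: Hc => /=; lia.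
  + by rewrite vars3; apply/all_runR => i; rewrite ltnS leqn0 => /eqP ->; rewrite addr0.
  + by move: H2; rewrite dest3 destS //.
- exists (3%N, 0%N, d); split; first by move: Hc => /=; lia.
  + by rewrite vars3; apply/all_runR => i; rewrite ltnS leqn0 => /eqP ->; rewrite addr0.
  + by move: H2; rewrite dest3 destS //.
- exists (3%N, 0%N, d); split; first by move: Hc => /=; lia.
  + by rewrite vars3; apply/all_runR => i; rewrite ltnS leqn0 => /eqP ->; rewrite addr0.
  + by move: H2; rewrite dest3 destS //.
- exists (3%N, j.+1, d); split; first by move: Hc => /=; lia.
  + rewrite vars3; apply/all_runR => -[|i] Hi; first by rewrite addr0.
    move: H1; rewrite vars3 => /all_runR /(_ i) H1.
    have -> : a + (i.+1)%:Z = a + 1 + i%:Z by lia.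
    by apply: H1; lia.
  + move: H2; rewrite !dest3.
    by have -> : a + 1 + (j.+1)%:Z = a + (j.+2)%:Z by lia.
- case: j Hc H1 H2 => [|j] Hc H1 H2.
  + exists (1%N, 0%N, d); split; first by move: Hc => /=; lia.
    * by rewrite vars1 /= Va.
    * move: H2; rewrite dest4 destS //.
      by have -> : a + 1 - 1%:Z = a by lia.
  + exists (4%N, j, d); split; first by move: Hc => /=; lia.
    * rewrite vars4; apply/all_runL => i Hi.
      move: H1; rewrite vars4 => /all_runL /(_ i.+1) H1.
      have -> : a - (i.+1)%:Z = a + 1 - (i.+2)%:Z by lia.
      by apply: H1; lia.
    * move: H2; rewrite !dest4.
      by have -> : a + 1 - (j.+2)%:Z = a - (j.+1)%:Z by lia.
- by move: Hc => /=; lia.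
Qed.

Lemma extL M m a n : v (a - 1) m -> goodb M m (a - 1) n.+1 -> goodb M.+1 m a n.+1.
Proof.
move=> Va /goodbS [[[k j] d] [Hc H1 H2]]; apply/goodbS.
have {H2} H2 := @goodb_mono M M.+1 _ _ _ (leqnSn M) H2.
case: k Hc H1 H2 => [|[|[|[|[|k]]]]] Hc H1 H2.
- exists (4%N, 0%N, d); split; first by move: Hc => /=; lia.
  + by rewrite vars4; apply/all_runL => i; rewrite ltnS leqn0 => /eqP ->.
  + by move: H2; rewrite dest4 destS //.
- exists (4%N, 0%N, d); split; first by move: Hc => /=; lia.
  + by rewrite vars4; apply/all_runL => i; rewrite ltnS leqn0 => /eqP ->.
  + by move: H2; rewrite dest4 destS //.
- exists (4%N, 0%N, d); split; first by move: Hc => /=; lia.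
  + by rewrite vars4; apply/all_runL => i; rewrite ltnS leqn0 => /eqP ->.
  + by move: H2; rewrite dest4 destS //.
- case: j Hc H1 H2 => [|j] Hc H1 H2.
  + exists (2%N, 0%N, d); split; first by move: Hc => /=; lia.
    * by rewrite vars2 /= Va.
    * move: H2; rewrite dest3 destS //.
      by have -> : a - 1 + 1%:Z = a by lia.
  + exists (3%N, j, d); split; first by move: Hc => /=; lia.
    * rewrite vars3; apply/all_runR => i Hi.
      move: H1; rewrite vars3 => /all_runR /(_ i.+1) H1.
      have -> : a + i%:Z = a - 1 + (i.+1)%:Z by lia.
      by apply: H1; lia.
    * move: H2; rewrite !dest3.
      by have -> : a - 1 + (j.+2)%:Z = a + (j.+1)%:Z by lia.
- exists (4%N, j.+1, d); split; first by move: Hc => /=; lia.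
  + rewrite vars4; apply/all_runL => -[|i] Hi; first by [].
    move: H1; rewrite vars4 => /all_runL /(_ i) H1.
    have -> : a - (i.+2)%:Z = a - 1 - (i.+1)%:Z by lia.
    by apply: H1; lia.
  + move: H2; rewrite !dest4.
    by have -> : a - 1 - (j.+1)%:Z = a - (j.+2)%:Z by lia.
- by move: Hc => /=; lia.
Qed.

Lemma path_good s x n :
  path (H_adj u v) x s -> path (fun a b : vtx => (a.2 <= b.2)%N) x s ->
  (last x s).2 = (x.2 + n)%N -> exists M, goodb M x.2 x.1 n.
Proof.
elim: s x n => [|y s IH] x n /=.
  move=> _ _ H; have -> : n = 0%N by lia.
  by exists 0%N.
move=> /andP [Hxy Hp] /andP [Hle Hs] Hl.
case: n Hl => [|n] Hl; first by exists 0%N.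
move: Hxy; rewrite /H_adj => /or4P [Hup|Hup|Hh|Hh].
- move: Hup; rewrite /up_edge => /and3P [/eqP Hy2 Hd Ho].
  have [M HM] := IH y n Hp Hs ltac:(rewrite Hl Hy2; lia).
  exists M; apply/goodbS.
  have Hd3 : ((absz (y.1 - x.1 + 1)%R) < 3)%N by lia.
  have HD : forall k, (k < 3)%N -> dest x.1 (k, 0%N, (absz (y.1 - x.1 + 1)%R)) = y.1.
    by move=> k Hk; rewrite destS //; lia.
  move: HM; rewrite Hy2 => HM.
  case/or3P: Ho => Ho.
  + exists (0%N, 0%N, (absz (y.1 - x.1 + 1)%R)); split; first by rewrite /okc Hd3.
    * by rewrite vars0 /= Ho.
    * by rewrite HD.
  + exists (1%N, 0%N, (absz (y.1 - x.1 + 1)%R)); split; first by rewrite /okc Hd3.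
    * by rewrite vars1 /= Ho.
    * by rewrite HD.
  + exists (2%N, 0%N, (absz (y.1 - x.1 + 1)%R)); split; first by rewrite /okc Hd3.
    * by rewrite vars2 /= Ho.
    * by rewrite HD.
- move: Hup; rewrite /up_edge => /and3P [/eqP Hx2 _ _]; lia.
- move: Hh; rewrite /hor_edge => /and3P [/eqP Hy2 /eqP Hy1 Hv].
  have [M HM] := IH y n.+1 Hp Hs ltac:(rewrite Hl Hy2; lia).
  exists M.+1; apply: extR; first exact: Hv.
  by rewrite -Hy2 -Hy1.
- move: Hh; rewrite /hor_edge => /and3P [/eqP Hx2 /eqP Hx1 Hv].
  have [M HM] := IH y n.+1 Hp Hs ltac:(rewrite Hl Hx2; lia).
  have Hy1 : x.1 - 1 = y.1 by rewrite Hx1; lia.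
  exists M.+1; apply: extL.
  + by rewrite Hy1 Hx2.
  + by rewrite Hy1 Hx2.
Qed.

End Det.

Fixpoint Ls (a : int) (m n M : nat) : seq (seq idx) :=
  if n is n'.+1 then
    flatten [seq [seq vars a m c ++ J | J <- Ls (dest a c) m.+1 n' M] | c <- choices M]
  else [:: [::]].

Lemma LsE a m n M : Ls a m n.+1 M =
  flatten [seq [seq vars a m c ++ J | J <- Ls (dest a c) m.+1 n M] | c <- choices M].
Proof. by []. Qed.

Lemma has_flatten (T : Type) (p : pred T) (ss : seq (seq T)) :
  has p (flatten ss) = has (has p) ss.
Proof. by elim: ss => //= s ss IH; rewrite has_cat IH. Qed.

Lemma goodb_Ls u v M m a n : goodb u v M m a n = has (all (opn u v)) (Ls a m n M).
Proof.
elim: n m a => [//|n IH] m a.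
rewrite goodbE LsE has_flatten has_map; apply: eq_has => c /=.
rewrite has_map IH; case E: (all (opn u v) (vars a m c)) => /=.
- by apply: eq_has => J /=; rewrite all_cat E.
- by apply/esym/negP => /hasP [J _]; rewrite /= all_cat E.
Qed.

Definition lvl (i : idx) : nat := match i with inl p => p.2 | inr p => p.2 end.

Lemma vars_prop a m c : uniq (vars a m c) && all (fun i => lvl i == m) (vars a m c).
Proof.
case: c => [[k j] d].
case: k => [|[|[|[|k]]]]; try by rewrite /= eqxx.
- rewrite vars3; apply/andP; split.
  + rewrite map_inj_uniq ?iota_uniq // => i1 i2 [] H; lia.
  + by apply/allP => x /mapP [i _ ->] /=.
- rewrite (_ : vars a m (k.+4, j, d) = [seq inr (a - (i.+1)%:Z, m) | i <- iota 0 j.+1]) //.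
  apply/andP; split.
  + rewrite map_inj_uniq ?iota_uniq // => i1 i2 [] H; lia.
  + by apply/allP => x /mapP [i _ ->] /=.
Qed.

Lemma Ls_prop a m n M J : J \in Ls a m n M -> uniq J && all (fun i => (m <= lvl i)%N) J.
Proof.
elim: n m a J => [|n IH] m a J.
  by rewrite /= inE => /eqP ->.
rewrite LsE => /flattenP [s /mapP [c _ ->]] /mapP [J' HJ' ->].
have /andP [U1 A1] := vars_prop a m c.
have /andP [U2 A2] := IH _ _ _ HJ'.
rewrite cat_uniq U1 U2 all_cat /= andbT; apply/and3P; split.
- apply/hasPn => i Hi; apply/negP => Hv.
  move/allP: A1 => /(_ i Hv) /eqP H1; move/allP: A2 => /(_ i Hi); lia.
- by apply/allP => i /(allP A1) /eqP ->.
- by apply/allP => i /(allP A2); lia.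
Qed.

Section W.
Variables (R : realType) (eps : R).
Hypotheses (e0 : 0 <= eps) (e1 : 2 * eps <= 1).

Lemma size_vars a m k j d :
  size (vars a m (k, j, d)) = if (k < 3)%N then 1%N else j.+1.
Proof.
case: k => [|[|[|[|k]]]] //.
- by rewrite vars3 size_map size_iota.
- by rewrite (_ : vars a m (k.+4, j, d) = [seq inr (a - (i.+1)%:Z, m) | i <- iota 0 j.+1]) // size_map size_iota.
Qed.

Lemma geo M : \sum_(j <- iota 0 M) eps ^+ j.+1 <= 2 * eps - 2 * eps ^+ M.+1.
Proof.
elim: M => [|M IH].
  by rewrite big_nil expr1 subrr.
rewrite -addn1 iotaD big_cat /= big_cons big_nil addr0 add0n.
have H : eps ^+ M.+2 <= 2^-1 * eps ^+ M.+1.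
  rewrite exprS; apply: ler_wpM2r; first exact: exprn_ge0.
  move: (e1); lra.
apply: le_trans (lerD IH (lexx _)) _.
rewrite addn1; move: (e0) (e1); lra.
Qed.

Lemma sum_choices a m M : \sum_(c <- choices M) eps ^+ size (vars a m c) <= 21 * eps.
Proof.
rewrite /choices big_allpairs_dep.
under eq_bigr => kj _ do rewrite (_ : iota 0 3 = [:: 0%N; 1%N; 2%N]) // !big_cons big_nil !size_vars.
apply: (@le_trans _ _ (\sum_(kj <- KJ M) 3 * eps ^+ (if (kj.1 < 3)%N then 1%N else kj.2.+1))).
  by apply: ler_sum => kj _ /=; lra.
rewrite /KJ big_cat big_map big_allpairs.
rewrite (_ : iota 0 3 = [:: 0%N; 1%N; 2%N]) // !big_cons big_nil /=.
have G := geo M.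
have Hg : 0 <= eps ^+ M.+1 by exact: exprn_ge0.
rewrite !expr1 addr0 -!mulr_sumr !big_nil.

move: (e0) (e1); lra.
Qed.

Lemma W_Ls a m n M : \sum_(J <- Ls a m n M) eps ^+ size J <= (21 * eps) ^+ n.
Proof.
elim: n a m => [|n IH] a m.
  by rewrite /= big_cons big_nil expr0 addr0.
rewrite LsE big_flatten big_map.
under eq_bigr => c _ do rewrite big_map.
apply: le_trans (_ : \sum_(c <- choices M) eps ^+ size (vars a m c) * (21 * eps) ^+ n <= _).
  apply: ler_sum => c _.
  under eq_bigr => J _ do rewrite size_cat exprD.
  rewrite -mulr_sumr; apply: ler_wpM2l; first exact: exprn_ge0.
  exact: IH.
rewrite -mulr_suml exprS; apply: ler_wpM2r; first by apply: exprn_ge0; move: (e0); lra.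
exact: sum_choices.
Qed.

End W.

Local Open Scope classical_set_scope.

Section Prob.
Variables (R : realType) (d : measure_display) (T : measurableType d)
  (P : probability T R) (X : idx -> T -> bool) (eps : R).
Hypothesis HX : iid_bernoulli P X eps.

Definition cyl (J : seq idx) : set T := [set w | all (fun i => X i w) J].
Definition cylU (LL : seq (seq idx)) : set T :=
  [set w | has (fun J => all (fun i => X i w) J) LL].

Lemma cyl_meas J : measurable (cyl J).
Proof.
elim: J => [|i J IH].
  have -> : cyl [::] = setT by apply/seteqP; split => w //=.
  exact: measurableT.
have -> : cyl (i :: J) = [set w | X i w] `&` cyl J.
  apply/seteqP; split => w; rewrite /cyl /=; first by move/andP.
  by move=> [H1 H2]; apply/andP.
by apply: measurableI => //; case: HX.
Qed.

Lemma cylU_meas LL : measurable (cylU LL).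
Proof.
elim: LL => [|J LL IH].
  have -> : cylU [::] = set0 by apply/seteqP; split => w //=.
  exact: measurable0.
have -> : cylU (J :: LL) = cyl J `|` cylU LL.
  apply/seteqP; split => w; rewrite /cylU /cyl /=; first by move/orP.
  by move=> [H|H]; apply/orP; [left|right].
exact: measurableU (cyl_meas J) IH.
Qed.

Lemma P_cyl J : uniq J -> P (cyl J) = (eps ^+ size J)%:E.
Proof.
case: HX => _ H2 H3 U.
have := H3 J (fun _ => true) U.
have -> : [set w | all (fun i => X i w == true) J] = cyl J.
  by apply/seteqP; split => w /=; rewrite (eq_all (fun i => eqb_id (X i w))).
move=> ->; under eq_bigr => i _ do rewrite (H2 i).
rewrite prodEFin; congr (_%:E).
by elim: J {U} => [|i J IH]; rewrite ?big_nil ?big_cons ?IH ?exprS.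
Qed.

Lemma P_cylU LL : (forall J, J \in LL -> uniq J) ->
  (P (cylU LL) <= (\sum_(J <- LL) eps ^+ size J)%:E)%E.
Proof.
elim: LL => [|J LL IH] HU.
  have -> : cylU [::] = set0 by apply/seteqP; split => w //=.
  by rewrite measure0 big_nil.
have -> : cylU (J :: LL) = cyl J `|` cylU LL.
  apply/seteqP; split => w; rewrite /cylU /cyl /=; first by move/orP.
  by move=> [H|H]; apply/orP; [left|right].
apply: le_trans (measureU2 _ (cyl_meas J) (cylU_meas LL)) _.
rewrite big_cons EFinD; apply: leeD.
  by rewrite -P_cyl; [exact: lexx|apply: HU; rewrite inE eqxx].
by apply: IH => J' HJ'; apply: HU; rewrite inE HJ' orbT.
Qed.

Lemma opnX w : opn (Ucfg X w) (Vcfg X w) =1 (fun i => X i w).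
Proof. by case => [[k m]|[k m]]. Qed.

Definition BB (Z0 : seq int) (n M : nat) : set T :=
  cylU (flatten [seq Ls z 0 n M | z <- Z0]).
Definition AA (Z0 : seq int) (n : nat) : set T := \bigcup_M BB Z0 n M.

Lemma BB_good Z0 n M w :
  BB Z0 n M w <-> exists2 z, z \in Z0 & goodb (Ucfg X w) (Vcfg X w) M 0 z n.
Proof.
have E z : goodb (Ucfg X w) (Vcfg X w) M 0 z n = has (all (fun i => X i w)) (Ls z 0 n M).
  by rewrite goodb_Ls; apply: eq_has => J; exact: (eq_all (opnX w) J).
rewrite /BB /cylU /= has_flatten has_map.
split => [/hasP [z Hz H]|[z Hz H]]; last first.
  by apply/hasP; exists z => //=; rewrite -E.
by exists z => //; rewrite E.
Qed.

Lemma BB_meas Z0 n M : measurable (BB Z0 n M).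
Proof. exact: cylU_meas. Qed.

Lemma AA_meas Z0 n : measurable (AA Z0 n).
Proof. by apply: bigcupT_measurable => M; exact: BB_meas. Qed.

Lemma BB_mono Z0 n M M' : (M <= M')%N -> BB Z0 n M `<=` BB Z0 n M'.
Proof.
move=> HM w /BB_good [z Hz H]; apply/BB_good; exists z => //.
exact: goodb_mono _ _ _ _ _ _ _ HM H.
Qed.

Hypotheses (e0 : 0 <= eps) (e1 : 2 * eps <= 1).

Lemma P_BB Z0 n M : (P (BB Z0 n M) <= ((size Z0)%:R * (21 * eps) ^+ n)%:E)%E.
Proof.
have HU : forall J, J \in flatten [seq Ls z 0 n M | z <- Z0] -> uniq J.
  move=> J /flattenP [s /mapP [z _ ->]] HJ.
  by have /andP [] := Ls_prop _ _ _ _ _ HJ.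
rewrite /BB; apply: (le_trans (P_cylU _ HU)).
rewrite lee_fin big_flatten big_map.
clear HU; elim: Z0 => [|z Z0 IH]; first by rewrite big_nil /= mul0r.
rewrite big_cons /= -add1n natrD mulrDl mul1r; apply: lerD => //.
exact: W_Ls.
Qed.

Lemma P_AA Z0 n : (P (AA Z0 n) <= ((size Z0)%:R * (21 * eps) ^+ n)%:E)%E.
Proof.
have nd : nondecreasing_seq (BB Z0 n).
  by move=> M M' HM; rewrite subsetEset; exact: BB_mono.
have := nondecreasing_cvg_mu (mu := P) (BB_meas Z0 n) (AA_meas Z0 n) nd.
move=> /cvg_lim <- //; apply: lime_le.
  by apply/cvg_ex; eexists; exact: (nondecreasing_cvg_mu (mu := P) (BB_meas Z0 n) (AA_meas Z0 n) nd).
by apply: nearW => M; exact: P_BB.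
Qed.

Lemma Zset_AA Z0 n k w : Zset (Ucfg X w) (Vcfg X w) Z0 n k -> AA Z0 n w.
Proof.
case: n => [|n] /=.
  move=> Hk; exists 0%N => //; apply/BB_good; by exists k.
move=> [x [s [Hx1 Hx2 [Hp Hs _] Hl]]].
have [M HM] := path_good _ _ _ _ n.+1 Hp Hs ltac:(by rewrite Hl Hx2).
exists M => //; apply/BB_good; exists x.1 => //.
by rewrite -Hx2.
Qed.

End Prob.

Local Open Scope classical_set_scope.

Definition bb (R : realType) (s : R) (N0 n : nat) : R :=
  if (n < N0)%N then 1 else s * (2^-1) ^+ n.

Arguments bb {R}.

Lemma sum_bb (R : realType) (s : R) (N0 K : nat) : 0 <= s ->
  \sum_(0 <= n < K) bb s N0 n <=
  (minn K N0)%:R + (if (N0 <= K)%N then 2 * s * (2^-1) ^+ N0 - 2 * s * (2^-1) ^+ K else 0).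
Proof.
move=> s0; elim: K => [|K IH].
  rewrite big_nil /=; case: N0 => [|N0] //=; rewrite ?subrr //; lra.
rewrite big_nat_recr //=.
have Hr : (2^-1 : R) ^+ K.+1 = (2^-1) ^+ K * 2^-1 by rewrite exprSr.
have Hp : 0 <= s * (2^-1 : R) ^+ K by apply: mulr_ge0 => //; apply: exprn_ge0; lra.
case: (ltnP K N0) => HK.
- have -> : bb s N0 K = 1 by rewrite /bb HK.
  have E1 : (N0 <= K)%N = false by lia.
  have E2 : minn K N0 = K by lia.
  rewrite E1 E2 addr0 in IH.
  have -> : minn K.+1 N0 = K.+1 by lia.
  case: (leqP N0 K.+1) => HK2.
  + have HN : N0 = K.+1 by lia.
    have E0 : (2^-1 : R) ^+ N0 = (2^-1) ^+ K.+1 by rewrite HN.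
    rewrite E0 subrr addr0 -addn1 natrD; lra.
  + rewrite addr0 -addn1 natrD; lra.
- have -> : bb s N0 K = s * (2^-1) ^+ K by rewrite /bb ltnNge HK.
  have -> : (N0 <= K.+1)%N = true by lia.
  have E2 : minn K N0 = N0 by lia.
  have -> : minn K.+1 N0 = N0 by lia.
  rewrite HK E2 in IH.
  rewrite Hr.
  have E : 2 * s * ((2^-1 : R) ^+ K * 2^-1) = s * (2^-1) ^+ K.
    by field.
  rewrite E; lra.
Qed.

Local Open Scope classical_set_scope.

Section Final.
Variables (R : realType) (d : measure_display) (T : measurableType d)
  (P : probability T R) (X : idx -> T -> bool) (eps : R).
Hypotheses (HX : iid_bernoulli P X eps) (e0 : 0 <= eps) (e1 : 42 * eps <= 1).

Let e1' : 2 * eps <= 1. Proof. move: (e0) (e1); lra. Qed.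

Lemma P_AA2 Z0 n : (P (AA d T X Z0 n) <= ((size Z0)%:R * (2^-1) ^+ n)%:E)%E.
Proof.
apply: le_trans (@P_AA R d T P X eps HX e0 e1' Z0 n) _.
rewrite lee_fin; apply: ler_wpM2l => //.
apply: lerXn2r; rewrite ?nnegrE.
- move: (e0); lra.
- by rewrite invr_ge0.
- rewrite -div1r; move: (e0) (e1); lra.
Qed.

Lemma AA_N Z0 : (P (\bigcap_n AA d T X Z0 n) = 0)%E.
Proof.
set N := \bigcap_n AA d T X Z0 n.
have mN : measurable N by apply: bigcapT_measurable => n; exact: (@AA_meas R d T P X eps HX Z0 n).
have H n : (P N <= ((size Z0)%:R / n.+1%:R)%:E)%E.
  apply: (@le_trans _ _ (P (AA d T X Z0 n))).
    apply: le_measure; rewrite ?inE; first exact: mN.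
      exact: (@AA_meas R d T P X eps HX Z0 n).
    by move=> w; apply.
  apply: (le_trans (P_AA2 Z0 n)); rewrite lee_fin; apply: ler_wpM2l => //.
  rewrite exprVn lef_pV2 ?posrE ?exprn_gt0 // -natrX ler_nat; exact: ltn_expl.
have N0 : (0 <= P N)%E := measure_ge0 P N.
have N1 : (P N <= 1)%E := probability_le1 P mN.
have Hf : P N \is a fin_num by rewrite ge0_fin_numE // (le_lt_trans N1) // ltey.
rewrite -(fineK Hf) in N0 H *; apply/eqP; rewrite eqe; apply/eqP.
set p := fine (P N) in N0 H *.
move: N0; rewrite lee_fin le_eqVlt => /orP [/eqP -> //|p0].
exfalso.
have s0 : 0 <= (size Z0)%:R / p :> R by apply: divr_ge0 => //; exact: ltW.
have := archi_boundP s0.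
set K := Num.Def.archi_bound _ => HK.
have := H K; rewrite lee_fin ler_pdivlMr // => HK2.
have : (size Z0)%:R < p * K%:R by move: HK; rewrite ltr_pdivrMr // mulrC.
have : p * K%:R <= p * K.+1%:R by apply: ler_wpM2l; [exact: ltW|rewrite ler_nat].
move: HK2; rewrite mulrC; lra.
Qed.

Lemma Zne_AA Z0 n w : ~ Z_empty (Ucfg X w) (Vcfg X w) Z0 n -> AA d T X Z0 n w.
Proof.
move/existsNP => [k /contrapT Hk]; exact: (@Zset_AA d T X Z0 n k w Hk).
Qed.

Lemma ae_part Z0 : {ae P, forall w, dies_out (Ucfg X w) (Vcfg X w) Z0}.
Proof.
exists (\bigcap_n AA d T X Z0 n); split.
- by apply: bigcapT_measurable => n; exact: (@AA_meas R d T P X eps HX Z0 n).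
- exact: AA_N.
- move=> w /= Hw n _; apply: Zne_AA => H; apply: Hw; by exists n.
Qed.

Local Open Scope ereal_scope.

Lemma Next_le Z0 w :
  N_ext R (Ucfg X w) (Vcfg X w) Z0 <= \sum_(n <oo) (\1_(AA d T X Z0 n) w)%:E.
Proof.
set G := \sum_(n <oo) _.
have Hpart : forall K, (forall n, (n < K)%N -> AA d T X Z0 n w) -> (K%:R)%:E <= G.
  move=> K HK.
  apply: le_trans (nneseries_lim_ge K _); last by move=> n _ _; rewrite lee_fin.
  rewrite (_ : \sum_(0 <= i < K) (\1_(AA d T X Z0 i) w)%:E = \sum_(0 <= i < K) (1%R)%:E).
    by rewrite sumEFin sumr_const_nat subn0.
  rewrite !big_nat; apply: eq_bigr => i Hi; rewrite indicE mem_set //.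
  exact: HK.
case: (pselect (dies_out (Ucfg X w) (Vcfg X w) Z0)) => Hd.
- have exP : exists n, `[< Z_empty (Ucfg X w) (Vcfg X w) Z0 n >].
    by case: Hd => n Hn; exists n; apply/asboolP.
  case: (ex_minnP exP) => N /asboolP HN Hmin.
  apply: (@le_trans _ _ (N%:R)%:E).
    by apply: ereal_inf_lbound; exists N.
  apply: Hpart => n Hn; apply: Zne_AA => Hz.
  have := Hmin n (introT (asboolP _) Hz); lia.
- have HG : forall K, (K%:R)%:E <= G.
    move=> K; apply: Hpart => n _; apply: Zne_AA => Hz; apply: Hd; by exists n.
  suff -> : G = +oo by rewrite leey.
  have G0 : 0 <= G by apply: nneseries_ge0 => n _ _; rewrite lee_fin.
  clear Hpart; move: G0 HG; case: G => [r| |] //= G0 HG.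
  have := archi_boundP (normr_ge0 r).
  set K := Num.Def.archi_bound _ => HK.
  have := HG K; rewrite lee_fin => HK2.
  exfalso; have := ler_norm r; lra.
Qed.

Lemma int_mono (f g : T -> \bar R) :
  (forall x, 0 <= f x) -> (forall x, f x <= g x) -> \int[P]_x f x <= \int[P]_x g x.
Proof.
move=> f0 fg.
have g0 : forall x, 0 <= g x by move=> x; exact: le_trans (fg x).
rewrite !ge0_integralTE //.
apply: ereal_sup_le => _ [h hf <-]; exists h => // x; exact: le_trans (hf x) (fg x).
Qed.

Lemma Next_ge0 Z0 w : 0 <= N_ext R (Ucfg X w) (Vcfg X w) Z0.
Proof. by apply: le_ereal_inf_tmp => _ [n _ <-]; rewrite lee_fin. Qed.

Lemma int_AA Z0 :
  \int[P]_w (\sum_(n <oo) (\1_(AA d T X Z0 n) w)%:E) = \sum_(n <oo) P (AA d T X Z0 n).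
Proof.
rewrite integral_nneseries //.
- apply: eq_eseriesr => n _; rewrite integral_indic ?setIT //.
  exact: (@AA_meas R d T P X eps HX Z0 n).
- move=> n; apply/measurable_realfun.measurable_EFinP; apply: measurable_realfun.measurable_indic.
  exact: (@AA_meas R d T P X eps HX Z0 n).
Qed.

Lemma series_AA Z0 (N0 : nat) : ((size Z0)%:R * (2^-1) ^+ N0 <= 1 :> R)%R ->
  \sum_(n <oo) P (AA d T X Z0 n) <= (N0%:R + 2)%:E.
Proof.
move=> HN0.
apply: lime_le; first by apply: is_cvg_nneseries => n _ _; exact: measure_ge0.
apply: nearW => K.
apply: (@le_trans _ _ (\sum_(0 <= n < K) (bb (size Z0)%:R N0 n)%:E)).
  apply: lee_sum => n _; rewrite /bb; case: ifP => _.
  - apply: probability_le1; exact: (@AA_meas R d T P X eps HX Z0 n).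
  - exact: P_AA2.
rewrite sumEFin lee_fin.
apply: (le_trans (@sum_bb R _ N0 K (ler0n _ _))).
have H1 : ((minn K N0)%:R <= N0%:R :> R)%R by rewrite ler_nat geq_minr.
have H2 : (0 <= (size Z0)%:R * (2^-1 : R) ^+ K)%R.
  by apply: mulr_ge0 => //; apply: exprn_ge0; rewrite invr_ge0.
case: ifP => _.
- rewrite -!mulrA; move: H1 H2 HN0; lra.
- move: H1; lra.
Qed.

Lemma int_part Z0 : Z0 != [::] ->
  \int[P]_w N_ext R (Ucfg X w) (Vcfg X w) Z0
    <= (((ln (2 : R))^-1 * ln (size Z0)%:R + 3)%R)%:E.
Proof.
move=> HZ.
have s1 : (0 < size Z0)%N by case: Z0 HZ.
set t := trunc_log 2 (size Z0).
apply: (le_trans (int_mono _ _ (Next_ge0 Z0) (Next_le Z0))).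
rewrite int_AA.
apply: (le_trans (series_AA Z0 t.+1 _)).
  have Hlt : (size Z0 < 2 ^ t.+1)%N by exact: trunc_log_ltn.
  rewrite exprVn -natrX mulrC -[X in (_ <= X)%R](mulVf (x := (2 ^ t.+1)%:R)).
    apply: ler_wpM2l; first by rewrite invr_ge0.
    by rewrite ler_nat ltnW.
  by rewrite pnatr_eq0 expn_eq0.
rewrite lee_fin.
have Ht : (t%:R <= (ln (2:R))^-1 * ln (size Z0)%:R)%R.
  have l2 : (0 < ln (2:R))%R by apply: ln_gt0; lra.
  rewrite mulrC ler_pdivlMr // mulr_natl -lnXn; last lra.
  rewrite ler_ln ?posrE ?exprn_gt0 ?ltr0n //.
  have -> : ((2:R) ^+ t)%R = ((2 ^ t)%N%:R)%R by rewrite natrX.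
  by rewrite ler_nat trunc_logP.
rewrite -addn1 natrD; move: Ht; lra.
Qed.

End Final.

Local Open Scope classical_set_scope.

Theorem lemma2 (R : realType) :
  exists eps0 : R, 0 < eps0 /\
  forall eps : R, 0 < eps -> eps < eps0 ->
    (forall (d : measure_display) (T : measurableType d) (P : probability T R)
            (X : idx -> T -> bool),
       iid_bernoulli P X eps ->
       forall Z0 : seq int,
         {ae P, forall w, dies_out (Ucfg X w) (Vcfg X w) Z0})
    /\
    exists beta0 beta1 : R, 0 < beta0 /\ 0 < beta1 /\
      forall (d : measure_display) (T : measurableType d) (P : probability T R)
             (X : idx -> T -> bool),
        iid_bernoulli P X eps ->
        forall Z0 : seq int, Z0 != [::] -> uniq Z0 ->
          (\int[P]_w N_ext R (Ucfg X w) (Vcfg X w) Z0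
             <= (beta0 * ln (size Z0)%:R + beta1)%:E)%E.
Proof.
exists (1 / 42); split; first lra.
move=> eps ep0 ep1.
have e0 : 0 <= eps by lra.
have e1 : 42 * eps <= 1 by lra.
split.
  move=> d T P X HX Z0; exact: (@ae_part R d T P X eps HX e0 e1 Z0).
exists (ln (2 : R))^-1, 3; split; last split.
- by rewrite invr_gt0; apply: ln_gt0; lra.
- lra.
- move=> d T P X HX Z0 HZ _; exact: (@int_part R d T P X eps HX e0 e1 Z0 HZ).
Qed.
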